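(* Let $C\subseteq V(K_n\times K_m)$ satisfy: (1) there exist $1\le n_1<n_2<n_3\le n$ and $1\le m_1<m_2<m_3\le m$ with $(n_1,m_1),(n_2,m_2),(n_3,m_3)\in C$; (2) every $v\in C$ is row-isolated or column-isolated in $C$; (3) $rs(C)=m-1$ and $cs(C)=n$; (4) at most one vertex of $C$ is isolated in $C$; (5) for every row $R_r$ such that every $v\in C\cap R_r$ is column-isolated but not row-isolated in $C$, we have $|C\cap R_r|\ge 3$. Then $C$ is an identifying code of $K_n\times K_m$.
   Context: $K_n\times K_m$ is the direct product of complete graphs: vertex set $[n]\times[m]$, with $(i,r)$ adjacent to $(j,s)$ iff $i\ne j$ and $r \ne s$. An identifying code is a dominating set $C$ with $N[x]\cap C\ne N[y]\cap C$ for all distinct vertices $x,y$ ($N[x]$ the closed neighborhood). Columns: $C_i=\{(i,t):t\in[m]\}$; rows: $R_r=\{(k,r):k\in[n]\}$. $cs(C)$ (resp. $rs(C)$) is the number of columns (resp. rows) meeting $C$. A vertex $v=(i,r)$ is column-isolated in $C$ if $C\cap C_i=\{v\}$, row-isolated in $C$ if $C\cap R_r=\{v\}$, and isolated in $C$ if both. *)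

(* Defs.v *)
From mathcomp Require Import all_boot.
Set Implicit Arguments. Unset Strict Implicit. Unset Printing Implicit Defensive.

(* Vertices of K_n x K_m: pairs (i, r) with i : 'I_n (column index), r : 'I_m (row index). *)
Definition vtx (n m : nat) := ('I_n * 'I_m)%type.

Definition adj n m (x y : vtx n m) : bool := (x.1 != y.1) && (x.2 != y.2).

Definition cnbhd n m (x : vtx n m) : {set vtx n m} := [set y | (y == x) || adj x y].

Definition dominating n m (C : {set vtx n m}) : Prop :=
  forall x : vtx n m, cnbhd x :&: C != set0.

Definition identifying_code n m (C : {set vtx n m}) : Prop :=
  dominating C /\
  forall x y : vtx n m, x != y -> cnbhd x :&: C != cnbhd y :&: C.

Definition column n m (i : 'I_n) : {set vtx n m} := [set v | v.1 == i].
Definition row n m (r : 'I_m) : {set vtx n m} := [set v | v.2 == r].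

Definition cs n m (C : {set vtx n m}) : nat := #|[set i : 'I_n | column m i :&: C != set0]|.
Definition rs n m (C : {set vtx n m}) : nat := #|[set r : 'I_m | row n r :&: C != set0]|.

Definition col_isolated n m (C : {set vtx n m}) (v : vtx n m) : bool :=
  C :&: column m v.1 == [set v].
Definition row_isolated n m (C : {set vtx n m}) (v : vtx n m) : bool :=
  C :&: row n v.2 == [set v].
Definition isolated n m (C : {set vtx n m}) (v : vtx n m) : bool :=
  col_isolated C v && row_isolated C v.

(* Main.v *)
Require Import Defs.
From mathcomp Require Import all_boot.
From mathcomp Require Import zify.
Set Implicit Arguments. Unset Strict Implicit. Unset Printing Implicit Defensive.

Section Aux.
Variables n m : nat.
Variable C : {set vtx n m}.

Lemma col_isoE (i : 'I_n) (r k : 'I_m) :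
  col_isolated C (i,r) -> (i,k) \in C -> k = r.
Proof.
move/eqP/setP => E Hk; move: (E (i,k)).
by rewrite !inE /= Hk eqxx xpair_eqE eqxx /= => /esym/eqP.
Qed.

Lemma row_isoE (i : 'I_n) (r : 'I_m) (k : 'I_n) :
  row_isolated C (i,r) -> (k,r) \in C -> k = i.
Proof.
move/eqP/setP => E Hk; move: (E (k,r)).
by rewrite !inE /= Hk eqxx xpair_eqE eqxx /= andbT => /esym/eqP.
Qed.

Lemma col_isoI (i : 'I_n) (r : 'I_m) :
  (forall k, (i,k) \in C -> k = r) -> (i,r) \in C -> col_isolated C (i,r).
Proof.
move=> F Hx; apply/eqP/setP => -[k t]; rewrite !inE /= xpair_eqE.
case: (eqVneq k i) => [->|nki] /=; last by rewrite andbF.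
rewrite !andbT; apply/idP/eqP => [/F //|-> //].
Qed.

Lemma row_isoI (i : 'I_n) (r : 'I_m) :
  (forall k, (k,r) \in C -> k = i) -> (i,r) \in C -> row_isolated C (i,r).
Proof.
move=> F Hx; apply/eqP/setP => -[k t]; rewrite !inE /= xpair_eqE.
case: (eqVneq t r) => [->|ntr] /=; last by rewrite !andbF.
rewrite !andbT; apply/idP/eqP => [/F //|-> //].
Qed.

Lemma not_row_iso (i k : 'I_n) (r : 'I_m) :
  (k,r) \in C -> k != i -> ~~ row_isolated C (i,r).
Proof. by move=> Hk nki; apply/negP => /row_isoE /(_ Hk) e; rewrite e eqxx in nki. Qed.

Lemma not_col_iso (i : 'I_n) (r k : 'I_m) :
  (i,k) \in C -> k != r -> ~~ col_isolated C (i,r).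
Proof. by move=> Hk nki; apply/negP => /col_isoE /(_ Hk) e; rewrite e eqxx in nki. Qed.

Hypothesis Hcs : cs C = n.

Lemma col_exists (i : 'I_n) : exists k, (i,k) \in C.
Proof.
case: (pickP (fun k => (i,k) \in C)) => [k Hk|none]; first by exists k.
exfalso.
have: [set i0 : 'I_n | column m i0 :&: C != set0] \subset [set~ i].
  apply/subsetP => i0; rewrite !inE.
  case/set0Pn => -[k t]; rewrite !inE /= => /andP[/eqP-> Ht].
  by apply/eqP => e; have := none t; rewrite /= -e Ht.
move/subset_leq_card; rewrite cardsC1 card_ord.
have e := Hcs; rewrite /cs in e; rewrite e; have := ltn_ord i; lia.
Qed.

Hypothesis Hrs : rs C = (m - 1)%N.

Lemma two_empty_rows (r s : 'I_m) : r != s ->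
  (forall k, (k,r) \notin C) -> (forall k, (k,s) \notin C) -> False.
Proof.
move=> nrs Hr Hs.
have: [set r0 : 'I_m | row n r0 :&: C != set0] \subset ~: [set r; s].
  apply/subsetP => r0; rewrite !inE.
  case/set0Pn => -[k t]; rewrite !inE /= => /andP[/eqP-> Ht].
  apply/negP => /orP[/eqP e|/eqP e]; rewrite e in Ht.
    by rewrite (negbTE (Hr k)) in Ht.
  by rewrite (negbTE (Hs k)) in Ht.
move/subset_leq_card; rewrite [#|~: _|]cardsCs setCK cards2 nrs card_ord.
have e := Hrs; rewrite /rs in e; rewrite e.
have /eqP nrs' : (r:nat) != s := nrs.
have := ltn_ord r; have := ltn_ord s; lia.
Qed.

Hypothesis H4 : (#|[set v in C | isolated C v]| <= 1)%N.

Lemma two_iso (u w : vtx n m) : u != w -> u \in C -> w \in C ->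
  isolated C u -> isolated C w -> False.
Proof.
move=> nuw Hu Hw Iu Iw.
have: [set u; w] \subset [set v in C | isolated C v].
  by apply/subsetP => v; rewrite !inE => /orP[/eqP->|/eqP->]; rewrite ?Hu ?Iu ?Hw ?Iw.
move/subset_leq_card; rewrite cards2 nuw => h.
by have := leq_trans h H4.
Qed.

End Aux.

Section Cases.
Variables n m : nat.
Variable C : {set vtx n m}.
Hypothesis H2 : forall v, v \in C -> row_isolated C v || col_isolated C v.
Hypothesis Hrs : rs C = (m - 1)%N.
Hypothesis Hcs : cs C = n.
Hypothesis H4 : (#|[set v in C | isolated C v]| <= 1)%N.
Hypothesis H5 : forall r : 'I_m,
      row n r :&: C != set0 ->
      (forall v, v \in row n r :&: C -> col_isolated C v && ~~ row_isolated C v) ->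
      (3 <= #|row n r :&: C|)%N.

Definition HEq (i j : 'I_n) (r s : 'I_m) := forall k t, (k,t) \in C ->
  ((k == i) && (t == r)) || ((i != k) && (r != t)) =
  ((k == j) && (t == s)) || ((j != k) && (s != t)).

Lemma HEq_sym i j r s : HEq i j r s -> HEq j i s r.
Proof. by move=> H k t Hk; rewrite H. Qed.

Lemma caseA i j r s : (i,r) \notin C -> (j,s) \notin C -> (i,r) != (j,s) ->
  HEq i j r s -> False.
Proof.
move=> Hx Hy nxy HE.
have HA : forall k t, (k,t) \in C -> ((i != k) && (r != t)) = ((j != k) && (s != t)).
  move=> k t Hkt; have := HE k t Hkt.
  have nx : (k == i) && (t == r) = false.
    by apply/negbTE/negP => /andP[/eqP ek /eqP et]; rewrite -ek -et Hkt in Hx.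
  have ny : (k == j) && (t == s) = false.
    by apply/negbTE/negP => /andP[/eqP ek /eqP et]; rewrite -ek -et Hkt in Hy.
  by rewrite nx ny.
case: (eqVneq i j) => [eij | nij].
  subst j.
  have nrs : r != s by apply: contraNneq nxy => ->.
  apply: (two_empty_rows Hcs Hrs nrs).
    move=> k; apply/negP => Hk; have := HA k r Hk.
    rewrite eqxx /= andbF [s == r]eq_sym nrs andbT => /esym/negbFE/eqP ek.
    by subst k; rewrite Hk in Hx.
  move=> k; apply/negP => Hk; have := HA k s Hk.
  rewrite eqxx /= andbF nrs andbT => /negbFE/eqP ek.
  by subst k; rewrite Hk in Hy.
case: (eqVneq r s) => [ers | nrs].
  subst s.
  have [k Hk] := col_exists Hcs i.
  have := HA i k Hk; rewrite eqxx /= [j == i]eq_sym nij /= => /esym/negbFE/eqP ek.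
  by subst k; rewrite Hk in Hx.
have colA : forall t, (i,t) \in C -> t = s.
  move=> t Ht; have := HA i t Ht; rewrite eqxx /= [j == i]eq_sym nij /=.
  by move=> /esym/negbFE/eqP ->.
have rowA : forall k, (k,s) \in C -> k = i.
  move=> k Hk; have := HA k s Hk; rewrite eqxx /= andbF nrs andbT.
  by move=> /negbFE/eqP ->.
have colB : forall t, (j,t) \in C -> t = r.
  move=> t Ht; have := HA j t Ht; rewrite eqxx /= nij /=.
  by move=> /negbFE/eqP ->.
have rowB : forall k, (k,r) \in C -> k = j.
  move=> k Hk; have := HA k r Hk; rewrite eqxx /= andbF [s == r]eq_sym nrs andbT.
  by move=> /esym/negbFE/eqP ->.
have [ka Ha] := col_exists Hcs i.
have [kb Hb] := col_exists Hcs j.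
have eka := colA _ Ha; have ekb := colB _ Hb; subst ka kb.
apply: (two_iso H4 _ Ha Hb).
- by apply/negP => /eqP [e]; rewrite e eqxx in nij.
- by rewrite /isolated (col_isoI colA Ha) (row_isoI rowA Ha).
- by rewrite /isolated (col_isoI colB Hb) (row_isoI rowB Hb).
Qed.

Lemma adj_of_HE i j r s : (i,r) \in C -> (i,r) != (j,s) -> HEq i j r s ->
  (i == j) = false /\ (r == s) = false.
Proof.
move=> Hx nxy HE; have := HE i r Hx; rewrite !eqxx /=.
move=> /esym/orP[/andP[/eqP eij /eqP ers]|/andP[nji nsr]].
  by subst; rewrite eqxx in nxy.
by split; apply/negbTE; rewrite eq_sym.
Qed.

Lemma caseB i j r s : (i,r) \in C -> (j,s) \notin C -> HEq i j r s -> False.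
Proof.
move=> Hx Hy HE.
have nxy : (i,r) != (j,s) by apply: contraNneq Hy => <-.
have [eij ers] := adj_of_HE Hx nxy HE.
have eji : (j == i) = false by rewrite eq_sym.
have esr : (s == r) = false by rewrite eq_sym.
have colB : forall t, (j,t) \in C -> t = r.
  move=> t Ht; have nts : (t == s) = false.
    by apply/negbTE/eqP => e; rewrite -e Ht in Hy.
  have := HE j t Ht; rewrite eji eij eqxx nts /=.  
  by move=> /negbFE/eqP ->.
have rowB : forall k, (k,r) \in C -> k = i \/ k = j.
  move=> k Hk; case: (eqVneq k i) => [->|nki]; first by left.
  right; have := HE k r Hk; rewrite eqxx (negbTE nki) eq_sym nki /= esr ers andbF /= andbT.
  by move=> /esym/negbFE/eqP ->.
have colA : forall t, (i,t) \in C -> t = r \/ t = s.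
  move=> t Ht; case: (eqVneq t r) => [->|ntr]; first by left.
  right; have := HE i t Ht; rewrite eqxx (negbTE ntr) /= eij eji /=.
  by move=> /esym/negbFE/eqP ->.
have [kb Hb] := col_exists Hcs j.
have ekb := colB _ Hb; subst kb.
have nij : i != j by rewrite eij.
have nji : j != i by rewrite eji.
have nrs : r != s by rewrite ers.
have nsr : s != r by rewrite esr.
case/boolP: ((i,s) \in C) => Ha.
  have := H2 Hx.
  by rewrite (negbTE (not_row_iso Hb nji)) (negbTE (not_col_iso Ha nsr)).
have cx : col_isolated C (i,r).
  apply: col_isoI Hx => k Hk; case: (colA k Hk) => // e.
  by rewrite -e Hk in Ha.
have cb : col_isolated C (j,r) by apply: col_isoI Hb.
have := H5 (r := r).
have ne : row n r :&: C != set0 by apply/set0Pn; exists (i,r); rewrite !inE /= eqxx Hx.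
move=> /(_ ne).
have hyp : forall v, v \in row n r :&: C -> col_isolated C v && ~~ row_isolated C v.
  move=> -[k t]; rewrite !inE /= => /andP[/eqP -> Hk].
  case: (rowB k Hk) => ->.
    by rewrite cx (not_row_iso Hb nji).
  by rewrite cb (not_row_iso Hx nij).
move=> /(_ hyp) h1.
have: row n r :&: C \subset [set (i,r); (j,r)].
  apply/subsetP => -[k t]; rewrite !inE /= => /andP[/eqP -> Hk].
  by case: (rowB k Hk) => ->; rewrite eqxx ?orbT.
move/subset_leq_card; rewrite cards2 => h2.
by have := leq_trans h1 h2; case: (_ != _).
Qed.

Lemma caseC i j r s : (i,r) \in C -> (j,s) \in C -> (i,r) != (j,s) ->
  HEq i j r s -> False.
Proof.
move=> Hx Hy nxy HE.
have [eij ers] := adj_of_HE Hx nxy HE.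
have eji : (j == i) = false by rewrite eq_sym.
have esr : (s == r) = false by rewrite eq_sym.
have nij : i != j by rewrite eij.
have nji : j != i by rewrite eji.
have nrs : r != s by rewrite ers.
have nsr : s != r by rewrite esr.
have nb : (j,r) \notin C.
  apply/negP => Hb; have := H2 Hb.
  by rewrite (negbTE (not_row_iso Hx nij)) (negbTE (not_col_iso Hy nsr)).
have na : (i,s) \notin C.
  apply/negP => Ha; have := H2 Ha.
  by rewrite (negbTE (not_row_iso Hy nji)) (negbTE (not_col_iso Hx nrs)).
apply: (two_iso H4 nxy Hx Hy).
  rewrite /isolated; apply/andP; split.
    apply: col_isoI Hx => t Ht; apply/eqP/negPn/negP => ntr.
    have := HE i t Ht; rewrite eqxx (negbTE ntr) /= eij eji /=.
    by move=> /esym/negbFE/eqP e; rewrite e Ht in na.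
  apply: row_isoI Hx => k Hk; apply/eqP/negPn/negP => nki.
  have := HE k r Hk; rewrite eqxx (negbTE nki) eq_sym nki /= esr ers andbF /= andbT.
  by move=> /esym/negbFE/eqP e; rewrite e Hk in nb.
rewrite /isolated; apply/andP; split.
  apply: col_isoI Hy => t Ht; apply/eqP/negPn/negP => nts.
  have := HE j t Ht; rewrite eqxx (negbTE nts) /= eij eji /=.
  by move=> /negbFE/eqP e; rewrite e Ht in nb.
apply: row_isoI Hy => k Hk; apply/eqP/negPn/negP => nkj.
have := HE k s Hk; rewrite eqxx (negbTE nkj) [j == k]eq_sym nkj /= ers esr andbF andbT /=.
by move=> /negbFE/eqP e; rewrite e Hk in na.
Qed.

End Cases.

Theorem mainTheorem13 (n m : nat) (C : {set vtx n m}) :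
  (* (1) *)
  (exists a b c : vtx n m,
      [/\ a \in C, b \in C & c \in C] /\
      [/\ (a.1 < b.1)%N, (b.1 < c.1)%N, (a.2 < b.2)%N & (b.2 < c.2)%N]) ->
  (* (2) *)
  (forall v, v \in C -> row_isolated C v || col_isolated C v) ->
  (* (3) *)
  rs C = (m - 1)%N -> cs C = n ->
  (* (4) *)
  (#|[set v in C | isolated C v]| <= 1)%N ->
  (* (5) rows meeting C all of whose C-vertices are column- but not row-isolated *)
  (forall r : 'I_m,
      row n r :&: C != set0 ->
      (forall v, v \in row n r :&: C -> col_isolated C v && ~~ row_isolated C v) ->
      (3 <= #|row n r :&: C|)%N) ->
  identifying_code C.
Proof.
move=> [a [b [c [[Ha Hb Hc] [l1 l2 l3 l4]]]]] H2 Hrs Hcs H4 H5.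
split.
  move=> [p q]; apply/set0Pn.
  have key : forall z : vtx n m, ~~ ((p != z.1) && (q != z.2)) ->
      (z.1 : nat) = p \/ (z.2 : nat) = q.
    move=> z; rewrite negb_and !negbK => /orP[/eqP->|/eqP->]; by [left|right].
  have [ea|/key na] := boolP ((p != a.1) && (q != a.2)).
    by exists a; rewrite /cnbhd !inE /adj /= ea orbT Ha.
  have [eb|/key nb] := boolP ((p != b.1) && (q != b.2)).
    by exists b; rewrite /cnbhd !inE /adj /= eb orbT Hb.
  have [ec|/key nc] := boolP ((p != c.1) && (q != c.2)).
    by exists c; rewrite /cnbhd !inE /adj /= ec orbT Hc.
  exfalso; lia.
move=> [i r] [j s] nxy; apply/negP => /eqP E.
have HE : HEq C i j r s.
  move=> k t Hkt; move/setP: E => E; have := E (k,t).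
  by rewrite /cnbhd !inE /adj /= Hkt !andbT !xpair_eqE.
case/boolP: ((i,r) \in C) => Hx; case/boolP: ((j,s) \in C) => Hy.
- exact: (caseC H2 H4 Hx Hy nxy HE).
- exact: (caseB H2 Hcs H5 Hx Hy HE).
- exact: (caseB H2 Hcs H5 Hy Hx (HEq_sym HE)).
- exact: (caseA Hrs Hcs H4 Hx Hy nxy HE).
Qed.
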